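(* Let $\kappa\in\mathbb{K}$, let $(\mathfrak{g},[-,-]_\mathfrak{g},\alpha_\mathfrak{g})$ and $(\mathfrak{h},[-,-]_\mathfrak{h},\alpha_\mathfrak{h})$ be Hom-Lie algebras, $\rho$ an action of $\mathfrak{g}$ on $\mathfrak{h}$, and $\mathcal{A}:\mathfrak{h}\to\mathfrak{g}$ a $\kappa$-weighted $\mathcal{O}$-operator with respect to $\rho$. Then: (i) $(\mathfrak{h},[-,-],\star,\alpha_\mathfrak{h})$ is a Hom-post-Lie algebra, where $[u,v]=\kappa[u,v]_\mathfrak{h}$ and $u\star v=\rho(\mathcal{A}u)v$; (ii) $(\mathfrak{h},[-,-]_\mathcal{A},\alpha_\mathfrak{h})$ is a Hom-Lie algebra, where $[u,v]_\mathcal{A}=\rho(\mathcal{A}u)v-\rho(\mathcal{A}v)u+\kappa[u,v]_\mathfrak{h}$, and $\mathcal{A}$ is a Hom-Lie algebra homomorphism from $(\mathfrak{h},[-,-]_\mathcal{A},\alpha_\mathfrak{h})$ to $(\mathfrak{g},[-,-]_\mathfrak{g},\alpha_\mathfrak{g})$; (iii) the map $\mathrm{ad}:\mathfrak{h}\to\mathrm{End}(\mathfrak{h})$, $\mathrm{ad}(u)v=u\star v=\rho(\mathcal{A}u)v$, is an action of the Hom-Lie algebra $(\mathfrak{h},[-,-]_\mathcal{A},\alpha_\mathfrak{h})$ on the Hom-Lie algebra $(\mathfrak{h},[-,-]_\mathfrak{h},\alpha_\mathfrak{h})$.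
   Context: All vector spaces are over a field $\mathbb{K}$ of characteristic zero. A Hom-Lie algebra $(\mathfrak{g},[-,-]_\mathfrak{g},\alpha_\mathfrak{g})$ is a vector space with a skew-symmetric bilinear bracket and a linear map $\alpha_\mathfrak{g}$ with $\alpha_\mathfrak{g}([x,y]_\mathfrak{g})=[\alpha_\mathfrak{g}(x),\alpha_\mathfrak{g}(y)]_\mathfrak{g}$ satisfying $[\alpha_\mathfrak{g}(x),[y,z]_\mathfrak{g}]_\mathfrak{g}+[\alpha_\mathfrak{g}(y),[z,x]_\mathfrak{g}]_\mathfrak{g}+[\alpha_\mathfrak{g}(z),[x,y]_\mathfrak{g}]_\mathfrak{g}=0$. A homomorphism $\varphi$ of Hom-Lie algebras satisfies $\varphi\circ\alpha_1=\alpha_2\circ\varphi$ and $\varphi([x,y]_1)=[\varphi x,\varphi y]_2$. A representation of a Hom-Lie algebra $\mathfrak{g}$ on $(\mathfrak{h},\alpha_\mathfrak{h})$ ($\mathfrak{h}$ a vector space, $\alpha_\mathfrak{h}$ linear) is a linear map $\rho:\mathfrak{g}\to\mathrm{End}(\mathfrak{h})$ with $\rho(\alpha_\mathfrak{g}(x))\circ\alpha_\mathfrak{h}=\alpha_\mathfrak{h}\circ\rho(x)$ and $\rho([x,y]_\mathfrak{g})\circ\alpha_\mathfrak{h}=\rho(\alpha_\mathfrak{g}(x))\circ\rho(y)-\rho(\alpha_\mathfrak{g}(y))\circ\rho(x)$. An action of $\mathfrak{g}$ on a Hom-Lie algebra $(\mathfrak{h},[-,-]_\mathfrak{h},\alpha_\mathfrak{h})$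 is a representation $\rho$ on $(\mathfrak{h},\alpha_\mathfrak{h})$ such that for all $x\in\mathfrak{g}$, $u,v\in\mathfrak{h}$: $\rho(\alpha_\mathfrak{g}(x))[u,v]_\mathfrak{h}=[\rho(x)u,\alpha_\mathfrak{h}(v)]_\mathfrak{h}+[\alpha_\mathfrak{h}(u),\rho(x)v]_\mathfrak{h}$ and $[\rho(x)u,\alpha_\mathfrak{h}(v)]_\mathfrak{h}=0$. A $\kappa$-weighted $\mathcal{O}$-operator from $\mathfrak{h}$ to $\mathfrak{g}$ with respect to an action $\rho$ is a linear map $\mathcal{A}:\mathfrak{h}\to\mathfrak{g}$ with $\mathcal{A}\circ\alpha_\mathfrak{h}=\alpha_\mathfrak{g}\circ\mathcal{A}$ and $[\mathcal{A}u,\mathcal{A}v]_\mathfrak{g}=\mathcal{A}(\rho(\mathcal{A}u)v-\rho(\mathcal{A}v)u+\kappa[u,v]_\mathfrak{h})$ for all $u,v\in\mathfrak{h}$. A Hom-post-Lie algebra $(\mathfrak{h},[-,-],\star,\alpha_\mathfrak{h})$ is a Hom-Lie algebra $(\mathfrak{h},[-,-],\alpha_\mathfrak{h})$ with a bilinear map $\star$ such that $\alpha_\mathfrak{h}(u\star v)=\alpha_\mathfrak{h}(u)\star\alpha_\mathfrak{h}(v)$ and for all $u,v,w$: $\alpha_\mathfrak{h}(u)\star[v,w]=[u\star v,\alpha_\mathfrak{h}(w)]+[\alpha_\mathfrak{h}(v),u\star w]$; $([u,v]+u\star v-v\star u)\star\alpha_\mathfrak{h}(w)=\alpha_\mathfrak{h}(u)\star(v\star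 w)-\alpha_\mathfrak{h}(v)\star(u\star w)$; $\alpha_\mathfrak{h}(u)\star[v,w]=[u\star v,\alpha_\mathfrak{h}(w)]=0$. *)

(* Defs.v *)
From HB Require Import structures.
From mathcomp Require Import all_boot all_order all_algebra.
Set Implicit Arguments. Unset Strict Implicit. Unset Printing Implicit Defensive.
Import GRing.Theory.
Local Open Scope ring_scope.

Section HomLie.
Variable K : fieldType.

Definition lin (V W : lmodType K) (f : V -> W) : Prop :=
  forall (a : K) (u v : V), f (a *: u + v) = a *: f u + f v.

Definition bilin (U V W : lmodType K) (b : U -> V -> W) : Prop :=
  (forall u, lin (b u)) /\ (forall v, lin (fun u => b u v)).

Definition HomLieAlg (V : lmodType K) (br : V -> V -> V) (al : V -> V) : Prop :=
  [/\ bilin br, lin al,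
      (forall x y, br x y = - br y x),
      (forall x y, al (br x y) = br (al x) (al y)) &
      (forall x y z,
         br (al x) (br y z) + br (al y) (br z x) + br (al z) (br x y) = 0)].

Definition HomLieHom (V W : lmodType K) (br1 : V -> V -> V) (al1 : V -> V)
  (br2 : W -> W -> W) (al2 : W -> W) (phi : V -> W) : Prop :=
  [/\ lin phi,
      (forall x, phi (al1 x) = al2 (phi x)) &
      (forall x y, phi (br1 x y) = br2 (phi x) (phi y))].

Definition HomLieRep (G H : lmodType K) (brg : G -> G -> G) (alg : G -> G)
  (alh : H -> H) (rho : G -> H -> H) : Prop :=
  [/\ bilin rho, lin alh,
      (forall x v, rho (alg x) (alh v) = alh (rho x v)) &
      (forall x y v,
         rho (brg x y) (alh v) = rho (alg x) (rho y v) - rho (alg y) (rho x v))].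

Definition HomLieAction (G H : lmodType K) (brg : G -> G -> G) (alg : G -> G)
  (brh : H -> H -> H) (alh : H -> H) (rho : G -> H -> H) : Prop :=
  [/\ HomLieRep brg alg alh rho,
      (forall x u v,
         rho (alg x) (brh u v) = brh (rho x u) (alh v) + brh (alh u) (rho x v)) &
      (forall x u v, brh (rho x u) (alh v) = 0)].

Definition OOperator (G H : lmodType K) (kappa : K) (brg : G -> G -> G)
  (alg : G -> G) (brh : H -> H -> H) (alh : H -> H) (rho : G -> H -> H)
  (A : H -> G) : Prop :=
  [/\ lin A,
      (forall u, A (alh u) = alg (A u)) &
      (forall u v, brg (A u) (A v) =
                   A (rho (A u) v - rho (A v) u + kappa *: brh u v))].

Definition HomPostLieAlg (V : lmodType K) (br : V -> V -> V)
  (star : V -> V -> V) (al : V -> V) : Prop :=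
  HomLieAlg br al /\ [/\ bilin star,
      (forall u v, al (star u v) = star (al u) (al v)),
      (forall u v w, star (al u) (br v w) = br (star u v) (al w) + br (al v) (star u w)),
      (forall u v w, star (br u v + star u v - star v u) (al w)
                     = star (al u) (star v w) - star (al v) (star u w)) &
      (forall u v w, star (al u) (br v w) = br (star u v) (al w) /\
                     br (star u v) (al w) = 0)].

End HomLie.

(* Main.v *)
Require Import Defs.
From mathcomp Require Import all_boot all_order all_algebra.
Local Open Scope ring_scope.
Import GRing.Theory.
Set Implicit Arguments.

Lemma zid (V : zmodType) (p1 p2 p3 p4 p5 p6 q1 q2 q3 : V) :
 ((p1 - p2) - (p3 - p4) + q1) + ((p3 - p5) - (p6 - p2) + q2) + ((p6 - p4) - (p1 - p5) + q3) = q1+q2+q3.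
Proof.
rewrite !opprB.
apply/eqP; rewrite -subr_eq0; apply/eqP.
rewrite !opprD !addrA.
rewrite (ACl ((1*14)*(8*2)*(3*12)*(6*4)*(5*16)*(13*7)*(11*9)*(10*17)*(15*18)))/=.
by rewrite !addrN !addr0.
Qed.

Section L.
Variable K : fieldType.
Implicit Types V W U : lmodType K.

Lemma lin0 V W (f : V -> W) : lin f -> f 0 = 0.
Proof.
move=> h; have := h 1 0 0; rewrite scale1r addr0 => e.
by rewrite scale1r in e; apply: (addrI (f 0)); rewrite addr0 -e.
Qed.
Lemma linD V W (f : V -> W) : lin f -> forall u v, f (u + v) = f u + f v.
Proof. by move=> h u v; have := h 1 u v; rewrite !scale1r. Qed.
Lemma linZ V W (f : V -> W) : lin f -> forall a u, f (a *: u) = a *: f u.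
Proof. by move=> h a u; have := h a u 0; rewrite (lin0 h) !addr0. Qed.
Lemma linN V W (f : V -> W) : lin f -> forall u, f (- u) = - f u.
Proof. by move=> h u; rewrite -scaleN1r linZ // scaleN1r. Qed.
Lemma linB V W (f : V -> W) : lin f -> forall u v, f (u - v) = f u - f v.
Proof. by move=> h u v; rewrite linD // linN. Qed.

Lemma lin_add V W (f g : V -> W) : lin f -> lin g -> lin (fun x => f x + g x).
Proof.
move=> hf hg a u v; rewrite hf hg scalerDr.
by rewrite addrACA.
Qed.
Lemma lin_opp V W (f : V -> W) : lin f -> lin (fun x => - f x).
Proof. by move=> hf a u v; rewrite hf opprD scalerN. Qed.
Lemma lin_scale V W (k : K) (f : V -> W) : lin f -> lin (fun x => k *: f x).
Proof. by move=> hf a u v; rewrite hf scalerDr !scalerA mulrC. Qed.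

Lemma bilin_add U V W (b1 b2 : U -> V -> W) : bilin b1 -> bilin b2 ->
  bilin (fun u v => b1 u v + b2 u v).
Proof.
move=> [h1 h2] [h3 h4]; split=> x.
  exact: lin_add.
exact: (lin_add (h2 x) (h4 x)).
Qed.
Lemma bilin_opp U V W (b : U -> V -> W) : bilin b -> bilin (fun u v => - b u v).
Proof. move=> [h1 h2]; split=> x; [exact: lin_opp | exact: (lin_opp (h2 x))]. Qed.
Lemma bilin_scale U V W k (b : U -> V -> W) : bilin b -> bilin (fun u v => k *: b u v).
Proof. move=> [h1 h2]; split=> x; [exact: lin_scale | exact: (lin_scale k (h2 x))]. Qed.
Lemma bilin_swap V W (b : V -> V -> W) : bilin b -> bilin (fun u v => b v u).
Proof. by move=> [h1 h2]; split. Qed.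

Lemma bD1 U V W (b : U -> V -> W) : bilin b -> forall u u' v, b (u + u') v = b u v + b u' v.
Proof. by move=> [_ h] u u' v; exact: (linD (h v)). Qed.
Lemma bD2 U V W (b : U -> V -> W) : bilin b -> forall u v v', b u (v + v') = b u v + b u v'.
Proof. by move=> [h _] u v v'; exact: (linD (h u)). Qed.
Lemma bZ1 U V W (b : U -> V -> W) : bilin b -> forall a u v, b (a *: u) v = a *: b u v.
Proof. by move=> [_ h] a u v; exact: (linZ (h v)). Qed.
Lemma bZ2 U V W (b : U -> V -> W) : bilin b -> forall a u v, b u (a *: v) = a *: b u v.
Proof. by move=> [h _] a u v; exact: (linZ (h u)). Qed.
Lemma bB2 U V W (b : U -> V -> W) : bilin b -> forall u v v', b u (v - v') = b u v - b u v'.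
Proof. by move=> [h _] u v v'; exact: (linB (h u)). Qed.
End L.

Theorem mainTheorem11 (K : fieldType) (charK0 : [pchar K] =i pred0) (kappa : K)
  (G H : lmodType K) (brg : G -> G -> G) (alg : G -> G)
  (brh : H -> H -> H) (alh : H -> H) (rho : G -> H -> H) (A : H -> G) :
  HomLieAlg brg alg -> HomLieAlg brh alh ->
  HomLieAction brg alg brh alh rho ->
  OOperator kappa brg alg brh alh rho A ->
  let br := fun u v => kappa *: brh u v in
  let star := fun u v => rho (A u) v in
  let brA := fun u v => rho (A u) v - rho (A v) u + kappa *: brh u v in
  [/\ HomPostLieAlg br star alh,
      HomLieAlg brA alh /\ HomLieHom brA alh brg alg A &
      HomLieAction brA alh brh alh star].
Proof.
move=> [bgL algL skg homg jacg] [bhL alhL skh homh jach]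
  [[rhoL _ rhoA rhoB] act1 act2] [AL Aal Abr] br star brA.
have act2' x u v : brh (alh u) (rho x v) = 0 by rewrite skh act2 oppr0.
have act0 x u v : rho (alg x) (brh u v) = 0 by rewrite act1 act2 act2' addr0.
have bstar : bilin star.
  split=> [u|v] a x y; first by rewrite /star (bD2 rhoL) (bZ2 rhoL).
  by rewrite /star AL (bD1 rhoL) (bZ1 rhoL).
have bbr : bilin br by apply: bilin_scale.
have bbrA : bilin brA.
  apply: bilin_add; last by apply: bilin_scale.
  apply: bilin_add => //; apply: bilin_opp; exact: bilin_swap.
have T x y z : brA (alh x) (brA y z) =
   (rho (alg (A x)) (rho (A y) z) - rho (alg (A x)) (rho (A z) y))
 - (rho (alg (A y)) (rho (A z) x) - rho (alg (A z)) (rho (A y) x))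
 + kappa *: (kappa *: brh (alh x) (brh y z)).
  rewrite /brA -Abr rhoB Aal (bD2 rhoL) (bB2 rhoL) (bZ2 rhoL) act0.
  by rewrite (bD2 bhL) (bB2 bhL) (bZ2 bhL) !act2' subrr add0r scaler0 addr0.
split.
- split.
    split => //.
    + by move=> x y; rewrite /br skh scalerN.
    + by move=> x y; rewrite /br (linZ alhL) homh.
    + by move=> x y z; rewrite /br !(bZ2 bhL) -!scalerDr jach !scaler0.
  split => //.
  + by move=> u v; rewrite /star Aal rhoA.
  + by move=> u v w; rewrite /star /br Aal (bZ2 rhoL) act1 scalerDr.
  + move=> u v w.
    have -> : br u v + star u v - star v u = brA u v.
      by rewrite /br /star /brA [RHS]addrC addrA.
    by rewrite /star /brA -Abr rhoB !Aal.
  + move=> u v w; rewrite /star /br Aal (bZ2 rhoL) act0 act2 scaler0; done.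
- split.
    split => //.
    + by move=> x y; rewrite /brA [brh y x]skh scalerN opprD opprB opprK.
    + by move=> x y; rewrite /brA !Aal !rhoA (linD alhL) (linB alhL) (linZ alhL) homh.
    + move=> x y z; rewrite !T zid -!scalerDr jach !scaler0 //.
  split => //.
  all: try by move=> x y; rewrite /brA Abr.
- split => //.
  + split => //.
    * by move=> u v; rewrite /star Aal rhoA.
    * by move=> x y v; rewrite /star /brA -Abr rhoB !Aal.
  + by move=> x u v; rewrite /star Aal act1.
  + by move=> x u v; rewrite /star act2.
Qed.
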